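(* In the full-information online setting for length-$\ell$ menus of lotteries over $m$ items with an arbitrary sequence of buyer valuations, running the weighted-majority algorithm (choose expert $k$ with probability proportional to $(1+\beta)^{\mathrm{Rev}_k/(mH)}$, $\mathrm{Rev}_k$ its cumulative revenue so far) over the finite set $\mathcal X$ of length-$\ell$ menus whose allocation probabilities lie in $\{0\}\cup\{(1-\alpha)^s: s\in\mathbb Z_{\ge0},(1-\alpha)^s\ge\alpha/(Hm)\}$ and whose prices are integer multiples of $\alpha$ in $[0,mH]$, with $\alpha=T^{-1}$, $\beta=T^{-1/2}$ (the discretization corresponding to $K=T^{1/2}$, $\delta=T^{-1/2}$), has regret $\tilde O(m^2H\ell\sqrt T)$.
   Context: A length-$\ell$ menu of lotteries over $m$ items consists of entries $(\vec\phi^{(j)},p^{(j)})$, $j=1,\dots,\ell$, with $\vec\phi^{(j)}\in[0,1]^m$ and $p^{(j)}\in[0,mH]$, plus the null entry $(\vec0,0)$. A buyer with item values $v(\vec e_i)\in[0,H]$ (additive or unit-demand; for unit-demand $\sum_i\phi^{(j)}[i]\le1$) selects an entry maximizing $\sum_i v(\vec e_i)\phi^{(j)}[i]-p^{(j)}$ and pays its price (the revenue $u_t$). In full information the learner observes $u_t$ on all menus after each round. Regret is $\mathbb E[\max_{\vec\rho}\sum_t u_t(\vec\rho)-\sum_t u_t(\vec\rho_t)]$ over all length-$\ell$ menus. *)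

(* Defs.v *)
From HB Require Import structures.
From mathcomp Require Import all_boot all_order all_algebra.
From mathcomp Require Import all_classical all_reals all_analysis.
Set Implicit Arguments. Unset Strict Implicit. Unset Printing Implicit Defensive.
Import Order.TTheory GRing.Theory Num.Theory.
Local Open Scope classical_set_scope.
Local Open Scope ring_scope.

Section Menus.
Variable R : realType.

(* A length-l menu over m items: entries j : 'I_l, each an allocation vector
   (a row vector in R^m) and a price.  The null entry (0,0) is implicit. *)
Definition menu (m l : nat) := {ffun 'I_l -> 'rV[R]_m * R}.

(* A buyer is described by its item values v(e_i), a row vector in R^m. *)
Definition valuation (m : nat) := 'rV[R]_m.

(* Validity of a menu: phi^(j) in [0,1]^m, p^(j) in [0, mH];
   for unit-demand buyers (ud = true) additionally sum_i phi^(j)[i] <= 1. *)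
Definition valid_menu (ud : bool) (m l : nat) (H : R) (rho : menu m l) : Prop :=
  forall j : 'I_l,
    (forall i : 'I_m, 0 <= (rho j).1 0 i <= 1) /\
    0 <= (rho j).2 <= m%:R * H /\
    (ud -> \sum_(i < m) (rho j).1 0 i <= 1).

Definition entry_utility (m : nat) (v : valuation m) (e : 'rV[R]_m * R) : R :=
  \sum_(i < m) v 0 i * e.1 0 i - e.2.

(* Best achievable utility, including the null entry (utility 0). *)
Definition best_utility (m l : nat) (rho : menu m l) (v : valuation m) : R :=
  \big[Num.max/0]_(j < l) entry_utility v (rho j).

(* Revenue u(rho; v): the buyer picks a utility-maximizing entry (the null
   entry included, price 0); ties are broken in favour of the highest price. *)
Definition revenue (m l : nat) (rho : menu m l) (v : valuation m) : R :=
  \big[Num.max/0]_(j < l | entry_utility v (rho j) == best_utility rho v)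
     (rho j).2.

Definition alloc_level (m : nat) (H alpha x : R) : Prop :=
  x = 0 \/ exists s : nat, x = (1 - alpha) ^+ s /\ alpha / (H * m%:R) <= (1 - alpha) ^+ s.

Definition price_level (alpha p : R) : Prop :=
  exists k : nat, p = k%:R * alpha.

Definition disc_menus (ud : bool) (m l : nat) (H alpha : R) : set (menu m l) :=
  [set rho | valid_menu ud H rho /\
     (forall (j : 'I_l) (i : 'I_m), alloc_level m H alpha ((rho j).1 0 i)) /\
     (forall j : 'I_l, price_level alpha (rho j).2)].

Definition cum_revenue (m l : nat) (v : nat -> valuation m) (rho : menu m l) (t : nat) : R :=
  \sum_(s < t) revenue rho (v s).

Definition wm_weight (m l : nat) (H beta : R) (v : nat -> valuation m)
    (rho : menu m l) (t : nat) : R :=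
  (1 + beta) `^ (cum_revenue v rho t / (m%:R * H)).

(* Expected revenue of the weighted-majority algorithm run over the expert
   set X in round t (expert chosen with probability proportional to its
   weight, computed from the revenues of rounds 0..t-1). *)
Definition wm_expected_revenue (m l : nat) (X : set (menu m l)) (H beta : R)
    (v : nat -> valuation m) (t : nat) : R :=
  (\sum_(rho \in X) wm_weight H beta v rho t * revenue rho (v t)) /
  (\sum_(rho \in X) wm_weight H beta v rho t).

Definition opt_revenue (ud : bool) (m l : nat) (H : R) (v : nat -> valuation m)
    (T : nat) : R :=
  sup [set \sum_(t < T) revenue rho (v t) | rho in [set rho : menu m l | valid_menu ud H rho]].

Definition wm_regret (ud : bool) (m l : nat) (H : R) (v : nat -> valuation m)
    (T : nat) : R :=
  let alpha : R := (T%:R)^-1 in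
  let beta : R := (Num.sqrt (T%:R))^-1 in
  @opt_revenue ud m l H v T -
  \sum_(t < T) @wm_expected_revenue m l (@disc_menus ud m l H alpha) H beta v t.
End Menus.

(* Main.v *)
Require Import Defs.
From HB Require Import structures.
From mathcomp Require Import all_boot all_order all_algebra.
From mathcomp Require Import all_classical all_reals all_analysis.
From mathcomp Require Import lra ring.
Import Order.TTheory GRing.Theory Num.Theory.
Local Open Scope ring_scope.
Section S1.
Variable R : realType.

Lemma powR_bern (b x : R) : 0 <= b -> 0 <= x <= 1 -> (1 + b) `^ x <= 1 + b * x.
Proof.
move=> b0 /andP[x0 x1].
have := @convex_expR R (Itv01 x0 x1) (ln (1 + b)) 0.
rewrite !convRE /= expR0 mulr0 addr0 lnK ?posrE; last by lra.
rewrite /powR gt_eqF; last by lra.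
move=> h; apply: le_trans h _.
by rewrite /unstable.onem; lra.
Qed.

Lemma sum_ge_mem (I : eqType) (s : seq I) (F : I -> R) i0 :
  (forall i, i \in s -> 0 <= F i) -> i0 \in s -> F i0 <= \sum_(i <- s) F i.
Proof.
elim: s => [|a s IH] //= Fge; rewrite big_cons in_cons => /orP[/eqP->|ins].
  rewrite lerDl big_seq sumr_ge0 // => i ins; apply: Fge.
  by rewrite in_cons ins orbT.
have Fs : forall i, i \in s -> 0 <= F i.
  by move=> i ins'; apply: Fge; rewrite in_cons ins' orbT.
apply: le_trans (IH Fs ins) _.
by rewrite lerDr Fge // mem_head.
Qed.

Lemma ln1p_ge (b : R) : 0 <= b -> b / (1 + b) <= ln (1 + b).
Proof.
move=> b0.
have h := @le_ln1Dx R (- (b / (1 + b))).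
have e : 1 + - (b / (1 + b)) = (1 + b)^-1 by field; lra.
rewrite e lnV ?posrE in h; last by lra.
have : -1 < - (b / (1 + b)).
  rewrite ltrN2 ltr_pdivrMr; last by lra.
  lra.
move=> /h; lra.
Qed.

Section WM.
Variables (I : eqType) (s : seq I) (g : I -> nat -> R) (M b : R) (T : nat).
Hypothesis M0 : 0 < M.
Hypothesis b0 : 0 < b.
Hypothesis gb : forall i t, i \in s -> (t < T)%N -> 0 <= g i t <= M.
Definition G i t := \sum_(u < t) g i u.
Definition w i t := (1 + b) `^ (G i t / M).
Definition W t := \sum_(i <- s) w i t.
Definition E t := (\sum_(i <- s) w i t * g i t) / W t.

Lemma w_gt0 i t : 0 < w i t.
Proof. apply: powR_gt0; exact: addr_gt0. Qed.

Lemma W_ge0 t : 0 <= W t.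
Proof. by rewrite sumr_ge0 // => i _; rewrite ltW // w_gt0. Qed.

Lemma W0 : W 0 = (size s)%:R.
Proof.
rewrite /W -sum1_size natr_sum; apply: eq_bigr => i _.
by rewrite /w /G big_ord0 mul0r powRr0.
Qed.

Lemma W_step t : (t < T)%N -> s != [::] ->
  W t.+1 <= W t * expR (b / M * E t).
Proof.
move=> tT sn.
have [a ains] : exists a, a \in s.
  by case: (s) sn => [//|a ?] _; exists a; rewrite in_cons eqxx.
have Wp : 0 < W t.
  apply: (lt_le_trans (w_gt0 a t)); rewrite /W. apply: (@sum_ge_mem I s (fun i => w i t) a) => // i _.
  by rewrite ltW // w_gt0.
have -> : W t.+1 = \sum_(i <- s) w i t * (1 + b) `^ (g i t / M).
  apply: eq_bigr => i _; rewrite /w /G big_ord_recr /= mulrDl powRD //.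
  by apply/implyP => _; rewrite gt_eqF // addr_gt0.
apply: (@le_trans _ _ (\sum_(i <- s) w i t * (1 + b * (g i t / M)))).
  rewrite big_seq [X in _ <= X]big_seq; apply: ler_sum => i ins.
  rewrite ler_pM2l ?w_gt0 //; apply: powR_bern; first exact: ltW.
  have := gb i t ins tT => /andP[g0 gM].
  by rewrite divr_ge0 ?ler_pdivrMr //= ?mul1r; have := M0; lra.
have -> : \sum_(i <- s) w i t * (1 + b * (g i t / M)) =
  W t + b / M * (E t * W t).
  rewrite /E divfK ?gt_eqF // /W big_distrr -big_split /=; apply: eq_bigr => i _.
  by field; have := M0; lra.
have := expR_ge1Dx (b / M * E t).
have := Wp. nra.
Qed.

Lemma W_bound t : (t <= T)%N -> s != [::] ->
  W t <= (size s)%:R * expR (b / M * \sum_(u < t) E u).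
Proof.
move=> + sn; elim: t => [|t IH] tT.
  by rewrite W0 big_ord0 mulr0 expR0 mulr1.
apply: le_trans (W_step t tT sn) _.
rewrite big_ord_recr /= mulrDr expRD mulrA ler_pM2r ?expR_gt0 //.
by apply: IH; apply: ltnW.
Qed.

Lemma wm_bound i0 : i0 \in s ->
  G i0 T <= \sum_(t < T) E t + b * T%:R * M + M * ln (size s)%:R / b.
Proof.
move=> i0s.
have sn : s != [::] by case: (s) i0s.
have h1 : w i0 T <= W T.
  by rewrite /W; apply: (@sum_ge_mem I s (fun i => w i T) i0) => // i _; rewrite ltW // w_gt0.
have h2 := W_bound T (leqnn T) sn.
set S := \sum_(t < T) E t in h2 *.
set x := G i0 T in h1 *.
have Np : (0 < (size s)%:R :> R).
  by rewrite ltr0n; case: (s) sn.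
have x0 : 0 <= x.
  by rewrite /x /G sumr_ge0 // => u _; have /andP[] := gb i0 u i0s (ltn_ord u).
have xT : x <= T%:R * M.
  have : x <= \sum_(u < T) M.
    rewrite /x /G; apply: ler_sum => u _.
    by have /andP[] := gb i0 u i0s (ltn_ord u).
  by rewrite sumr_const card_ord mulr_natl.
have hw : w i0 T = expR (x / M * ln (1 + b)).
  by rewrite /w /powR gt_eqF //; apply: addr_gt0.
have h3 : x / M * ln (1 + b) <= ln (size s)%:R + b / M * S.
  rewrite -(expRK (x / M * ln (1 + b))) -hw -[b / M * S]expRK -lnM ?posrE ?expR_gt0 //.
  rewrite ler_ln ?posrE ?w_gt0 ?mulr_gt0 ?expR_gt0 //.
  exact: le_trans h1 h2.
have hL := ln1p_ge b (ltW b0).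
set L := ln (1 + b) in h3 hL.
set q := b / (1 + b) in hL.
set K := M * ln (size s)%:R.
have lnN0 : 0 <= ln (size s)%:R :> R by rewrite ln_ge0 // ler1n; case: (s) sn.
have h4 : x * q <= K + b * S.
  have : x * L <= M * (ln (size s)%:R + b / M * S).
    by rewrite -ler_pdivrMl // mulrA [M^-1 * x]mulrC.
  rewrite mulrDr mulrA [M * (b / M)]mulrC divfK ?gt_eqF //.
  have : x * q <= x * L by rewrite ler_wpM2l.
  rewrite /K; lra.
have e1 : x * b - x * q = x * (b * q) by rewrite /q; field; have := b0; lra.
have q0 : 0 <= q by rewrite /q divr_ge0 //; have := b0; lra.
have qb : q <= b by rewrite /q ler_pdivrMr; have := b0; nra.
have bq : b * q <= b * b by rewrite ler_pM2l.
have h5 : x * (b * q) <= (T%:R * M) * (b * b).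
  by apply: ler_pM => //; exact: mulr_ge0 (ltW b0) q0.
rewrite -(ler_pM2l b0).
have eK : b * (K / b) = K by field; rewrite gt_eqF.
rewrite !mulrDr eK.
have := b0; nra.
Qed.
End WM.
End S1.

Set Implicit Arguments. Unset Strict Implicit. Unset Printing Implicit Defensive.
Section S2.
Variable R : realType.


Lemma bmax_ge0 (I : Type) (r : seq I) (P : pred I) (F : I -> R) :
  0 <= \big[Num.max/0]_(i <- r | P i) F i.
Proof.
elim: r => [|a r IH]; rewrite ?big_nil ?big_cons //.
by case: ifP => // _; rewrite le_max IH orbT.
Qed.

Lemma bmax_ge (I : eqType) (r : seq I) (P : pred I) (F : I -> R) k :
  k \in r -> P k -> F k <= \big[Num.max/0]_(i <- r | P i) F i.
Proof.
elim: r => [|a r IH] //; rewrite big_cons in_cons => /orP[/eqP<-|kr] Pk.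
  by rewrite Pk le_max lexx.
case: ifP => _; last exact: IH.
by rewrite le_max IH ?orbT.
Qed.

Lemma bmax_le (I : Type) (r : seq I) (P : pred I) (F : I -> R) B :
  0 <= B -> (forall i, P i -> F i <= B) -> \big[Num.max/0]_(i <- r | P i) F i <= B.
Proof.
move=> B0 FB; elim: r => [|a r IH]; rewrite ?big_nil ?big_cons //.
by case: ifP => // Pa; rewrite ge_max IH FB.
Qed.

Lemma bmax_cases (I : Type) (r : seq I) (P : pred I) (F : I -> R) :
  \big[Num.max/0]_(i <- r | P i) F i = 0 \/
  exists i, P i /\ \big[Num.max/0]_(i <- r | P i) F i = F i.
Proof.
elim: r => [|a r IH]; first by left; rewrite big_nil.
rewrite big_cons; case: ifP => Pa //.
case: (leP (F a) (\big[Num.max/0]_(i <- r | P i) F i)) => h.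
  exact: IH.
by right; exists a.
Qed.

Arguments bmax_cases {I} r P F.
Definition valu m (v : valuation R m) (phi : 'rV[R]_m) := \sum_(i < m) v 0 i * phi 0 i.

Lemma rev_disc m l (v : valuation R m) (rho rho' : menu R m l) (M eta a d : R) :
  0 < d -> 0 <= eta -> 0 <= a -> 0 <= M ->
  (forall j, (rho j).2 <= M) ->
  (forall j, (rho' j).2 <= (1 - d) * (rho j).2) ->
  (forall j, (1 - d) * (rho j).2 - a <= (rho' j).2) ->
  (forall j, valu v (rho j).1 - eta <= valu v (rho' j).1) ->
  (forall j, valu v (rho' j).1 <= valu v (rho j).1) ->
  revenue rho v <= revenue rho' v + (d * M + (eta + a) / d + a).
Proof.
move=> d0 eta0 a0 M0 pM p'u p'l vl vu.
have r'0 : 0 <= revenue rho' v by apply: bmax_ge0.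
have eps0 : 0 <= d * M + (eta + a) / d + a.
  have := mulr_ge0 (ltW d0) M0; have := divr_ge0 (addr_ge0 eta0 a0) (ltW d0); lra.
rewrite [revenue rho v]/revenue.
have [->|[j [/eqP uj ->]]] := bmax_cases (index_enum 'I_l)
   (fun j => entry_utility v (rho j) == best_utility rho v) (fun j => (rho j).2).
  lra.
have U0 : 0 <= best_utility rho v by apply: bmax_ge0.
have Uk : forall k, entry_utility v (rho k) <= best_utility rho v.
  move=> k; exact: (@bmax_ge _ (index_enum 'I_l) (fun=> true) (fun j => entry_utility v (rho j)) k (mem_index_enum _)).
have U'j : entry_utility v (rho' j) <= best_utility rho' v.
  exact: (@bmax_ge _ (index_enum 'I_l) (fun=> true) (fun j => entry_utility v (rho' j)) j (mem_index_enum _)).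
move: uj U'j; rewrite /entry_utility => uj U'j.
have vlj := vl j; have vuj := vu j; have p'uj := p'u j; have p'lj := p'l j; have pMj := pM j.
rewrite /valu in vlj vuj.
set Vj := \sum_(i < m) v 0 i * (rho j).1 0 i in uj vlj vuj.
set V'j := \sum_(i < m) v 0 i * (rho' j).1 0 i in U'j vlj vuj.
have dpM : d * (rho j).2 <= d * M by rewrite ler_pM2l.
have [e|[k [_ ek]]] := bmax_cases (index_enum 'I_l) (fun=> true)
   (fun j => entry_utility v (rho' j)).
  move: U'j; rewrite /best_utility e => U'j.
  have : (rho j).2 <= eta / d.
    rewrite ler_pdivlMr //.
    have := U0; rewrite -uj => U0'.
    lra.
  have : eta / d <= (eta + a) / d by rewrite ler_pM2r ?invr_gt0 // lerDl.
  have : 0 <= d * M by rewrite mulr_ge0 // ltW.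
  lra.
have rk : (rho' k).2 <= revenue rho' v.
  apply: (@bmax_ge _ (index_enum 'I_l) _ (fun j => (rho' j).2) k (mem_index_enum _)).
  by apply/eqP; rewrite /best_utility ek.
move: U'j; rewrite /best_utility ek /entry_utility => U'j.
have := Uk k; rewrite /entry_utility -uj => Ukk.
have vlk := vl k; have vuk := vu k; have p'uk := p'u k; have p'lk := p'l k; have pMk := pM k.
rewrite /valu in vlk vuk.
set Vk := \sum_(i < m) v 0 i * (rho k).1 0 i in Ukk vlk vuk.
set V'k := \sum_(i < m) v 0 i * (rho' k).1 0 i in U'j vlk vuk.
have h1 : (rho j).2 - (rho k).2 <= (eta + a) / d.
  rewrite ler_pdivlMr //.
  lra.
have h2 : d * (rho k).2 <= d * M by rewrite ler_pM2l.
lra.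
Qed.


Lemma bern (al : R) s : 0 <= al <= 1 -> (1 - al) ^+ s * (1 + s%:R * al) <= 1.
Proof.
move=> /andP[a0 a1]; elim: s => [|s IH]; first by rewrite expr0 mul0r addr0 mulr1.
have e0 : 0 <= (1 - al) ^+ s by rewrite exprn_ge0 // subr_ge0.
rewrite exprS -addn1 natrD.
have h : (1 - al) * (1 + (s%:R + 1%:R) * al) <= 1 + s%:R * al.
  have : 0 <= s%:R :> R by [].
  nra.
apply: le_trans IH.
move: h e0; set p := (1 - al) ^+ s; nra.
Qed.

Lemma round_price (al x : R) : 0 < al -> 0 <= x ->
  exists k : nat, k%:R * al <= x < k%:R * al + al.
Proof.
move=> a0 x0; exists (Num.truncn (x / al)).
have := truncn_itv (divr_ge0 x0 (ltW a0)).
rewrite -addn1 natrD => /andP[h1 h2].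
rewrite -ler_pdivlMr // h1 /=.
have -> : (Num.truncn (x / al))%:R * al + al = ((Num.truncn (x / al))%:R + 1) * al.
  by rewrite mulrDl mul1r.
by rewrite -ltr_pdivrMr.
Qed.

Lemma round_alloc (m : nat) (H al phi : R) :
  0 < al <= 1 -> 1 <= H * m%:R -> 0 <= phi <= 1 ->
  exists g, alloc_level m H al g /\ 0 <= g <= phi /\ phi - g <= 2 * al.
Proof.
move=> /andP[a0 a1] Hm /andP[p0 p1].
case: (leP phi (2 * al)) => hp.
  by exists 0; split; [left | lra].
have aHm : al / (H * m%:R) <= al.
  by rewrite ler_pdivrMr ?(lt_le_trans ltr01) // ler_peMr // ltW.
have exP : exists s, (1 - al) ^+ s <= phi.
  pose y := (al * phi)^-1.
  have apos : 0 < al * phi by rewrite mulr_gt0 //; lra.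
  exists (Num.truncn y).+1.
  have hy := truncnS_gt y.
  have hb := @bern al (Num.truncn y).+1 (introT andP (conj (ltW a0) a1)).
  set n := ((Num.truncn y).+1)%:R in hy hb.
  have e : y * (al * phi) = 1 by rewrite /y mulVf ?gt_eqF.
  have : 1 < n * (al * phi).
    by rewrite -e ltr_pM2r.
  have : 0 <= (1 - al) ^+ (Num.truncn y).+1 by rewrite exprn_ge0 // subr_ge0.
  set P := (1 - al) ^+ _.
  move=> P0 h1.
  rewrite mulrA in h1.
  have Q0 : 0 <= n * al by rewrite mulr_ge0 // ltW.
  move: hb h1 Q0; set Q := n * al => hb h1 Q0.
  have hb2 : P * (1 + Q) <= 1 := hb. clear hb. nra.
case: (ex_minnP exP) => s0 Ps0 mins.
case: s0 Ps0 mins => [|n] Ps0 mins.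
  rewrite expr0 in Ps0.
  exists 1; split; first by right; exists 0%N; rewrite expr0; split => //; lra.
  lra.
have Pn : phi < (1 - al) ^+ n.
  rewrite ltNge; apply/negP => hn.
  by have := mins n hn; rewrite ltnn.
exists ((1 - al) ^+ n.+1); split.
  right; exists n.+1; split => //.
  rewrite exprS; apply: le_trans aHm _.
  have : (1 - al) * phi <= (1 - al) * (1 - al) ^+ n.
    by rewrite ler_pM2l ?ltW // ; lra.
  nra.
have : (1 - al) * phi <= (1 - al) * (1 - al) ^+ n.
  rewrite ler_wpM2l ?ltW //; lra.
have : 0 <= (1 - al) ^+ n.+1 by rewrite exprn_ge0 // subr_ge0.
rewrite exprS in Ps0 *.
nra.
Qed.

Section Enum.
Variables (ud : bool) (m l : nat) (H al : R) (A P : nat).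
Definition Xd := @disc_menus R ud m l H al.
Definition ga (a : 'I_A.+1) : R := if (a : nat) == 0%N then 0 else (1 - al) ^+ (a.-1).
Definition Fty := {ffun 'I_l -> {ffun 'I_m -> 'I_A.+1} * 'I_P.+1}.
Definition enc (x : Fty) : menu R m l :=
  [ffun j => (\row_i ga ((x j).1 i), ((x j).2 : nat)%:R * al)].

Hypothesis hA : forall s, al / (H * m%:R) <= (1 - al) ^+ s -> (s < A)%N.
Hypothesis hP : forall k : nat, k%:R * al <= m%:R * H -> (k <= P)%N.

Lemma disc_enc rho : Xd rho -> exists x, enc x = rho.
Proof.
move=> [vl [alloc price]].
have hj : forall j, exists u : {ffun 'I_m -> 'I_A.+1} * 'I_P.+1,
    (forall i, ga (u.1 i) = (rho j).1 0 i) /\ ((u.2 : nat)%:R * al = (rho j).2).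
  move=> j.
  have hi : forall i, exists a : 'I_A.+1, ga a = (rho j).1 0 i.
    move=> i; case: (alloc j i) => [e|[s [e hs]]].
      by exists ord0; rewrite /ga /= e.
    have sA : (s.+1 < A.+1)%N by rewrite ltnS; exact: hA.
    by exists (Ordinal sA); rewrite /ga /= e.
  have [f hf] := fin_all_exists hi.
  case: (price j) => k e.
  have kP : (k < P.+1)%N.
    rewrite ltnS; apply: hP; rewrite -e.
    by have [_ [/andP[]]] := vl j.
  exists ([ffun i => f i], Ordinal kP); split => //= i.
  by rewrite ffunE.
have [F hF] := fin_all_exists hj.
exists [ffun j => F j]; apply/ffunP => j; rewrite !ffunE.
have [h1 h2] := hF j.
rewrite [RHS]surjective_pairing; congr pair => //.
by apply/rowP => i; rewrite mxE h1.
Qed.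

Definition sq := [seq y <- undup [seq enc x | x <- enum Fty] | `[< Xd y >]].

Lemma sq_uniq : uniq sq.
Proof. by rewrite filter_uniq // undup_uniq. Qed.

Lemma mem_sq y : y \in sq <-> Xd y.
Proof.
rewrite mem_filter mem_undup; split.
  by move=> /andP[/asboolP].
move=> Xy; apply/andP; split; first exact/asboolP.
have [x <-] := disc_enc Xy.
by apply/mapP; exists x; rewrite ?mem_enum.
Qed.

Lemma size_sq : (size sq <= #|Fty|)%N.
Proof.
rewrite size_filter; apply: leq_trans (count_size _ _) _.
by apply: leq_trans (size_undup _) _; rewrite size_map cardE.
Qed.

Lemma fsum_sq (f : menu R m l -> R) :
  \sum_(rho \in Xd) f rho = \sum_(rho <- sq) f rho.
Proof.
rewrite (fsbigE sq) //; last first.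
- by move=> i /mem_sq ->.
- by move=> i /= /mem_sq.
- exact: sq_uniq.
rewrite big_seq_cond [RHS]big_seq; apply: eq_bigl => i.
case: (boolP (i \in sq)) => //= /mem_sq hi.
by apply/idP; rewrite in_setE.
Qed.

Lemma card_Fty : #|Fty| = (((A.+1 ^ m) * P.+1) ^ l)%N.
Proof. by rewrite card_ffun card_prod card_ffun !card_ord. Qed.
End Enum.
End S2.

Section S3.
Variable R : realType.
Variables (ud : bool) (m l : nat) (H al d : R) (gs : R -> R) (ks : R -> nat).
Definition rnd (rho : menu R m l) : menu R m l :=
  [ffun j => (\row_i gs ((rho j).1 0 i), (ks ((1 - d) * (rho j).2))%:R * al)].
Hypothesis gsA : forall phi, alloc_level m H al (gs phi).
Hypothesis gsB : forall phi, 0 <= phi <= 1 -> 0 <= gs phi <= phi /\ phi - gs phi <= 2 * al.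
Hypothesis ksB : forall x, 0 <= x -> (ks x)%:R * al <= x < (ks x)%:R * al + al.
Hypothesis al0 : 0 < al.
Hypothesis d0 : 0 < d.
Hypothesis d1 : d <= 1.

Lemma rnd_price rho j : valid_menu ud H rho ->
  (rnd rho j).2 <= (1 - d) * (rho j).2 /\ (1 - d) * (rho j).2 - al <= (rnd rho j).2.
Proof.
move=> vr; have [_ [/andP[p0 _] _]] := vr j.
have x0 : 0 <= (1 - d) * (rho j).2 by rewrite mulr_ge0 // subr_ge0.
have /andP[h1 h2] := ksB x0.
rewrite ffunE /=; split => //; lra.
Qed.

Lemma rnd_disc rho : valid_menu ud H rho -> disc_menus ud H al (rnd rho).
Proof.
move=> vr; split; last split.
- move=> j; have [hphi [/andP[p0 pM] hud]] := vr j.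
  have [pu pl] := rnd_price j vr.
  split; last split.
  + by move=> i; rewrite ffunE mxE /=; have [/andP[g0 g1] _] := gsB (hphi i); rewrite g0 /=; have /andP[_ ?] := hphi i; lra.
  + have k0 : 0 <= (rnd rho j).2 by rewrite ffunE /= mulr_ge0 // ltW.
    rewrite k0 /=.
    have : (1 - d) * (rho j).2 <= (rho j).2 by have := d0; nra.
    lra.
  + move=> /hud h; apply: le_trans h; rewrite ffunE /=; apply: ler_sum => i _.
    by rewrite mxE; have [/andP[_ ?] _] := gsB (hphi i).
- by move=> j i; rewrite ffunE mxE.
- by move=> j; rewrite ffunE /=; eexists.
Qed.

Lemma rnd_valu rho (v : valuation R m) j : valid_menu ud H rho ->
  (forall i, 0 <= v 0 i <= H) ->
  valu v (rho j).1 - 2 * al * (m%:R * H) <= valu v (rnd rho j).1 /\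
  valu v (rnd rho j).1 <= valu v (rho j).1.
Proof.
move=> vr vb; have [hphi _] := vr j.
have hi : forall i, v 0 i * (rnd rho j).1 0 i <= v 0 i * (rho j).1 0 i /\
   v 0 i * (rho j).1 0 i - H * (2 * al) <= v 0 i * (rnd rho j).1 0 i.
  move=> i; rewrite ffunE mxE /=.
  have [/andP[g0 g1] gd] := gsB (hphi i).
  have /andP[v0 vH] := vb i.
  have : v 0 i * ((rho j).1 0 i - gs ((rho j).1 0 i)) <= H * (2 * al).
    by rewrite ler_pM // subr_ge0.
  nra.
split.
  have : \sum_(i < m) (v 0 i * (rho j).1 0 i - H * (2 * al)) <= valu v (rnd rho j).1.
    by apply: ler_sum => i _; have [] := hi i.
  rewrite sumrB sumr_const card_ord /valu.
  have -> : H * (2 * al) *+ m = 2 * al * (m%:R * H) by rewrite -mulr_natl; ring.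
  by [].
by apply: ler_sum => i _; have [] := hi i.
Qed.
End S3.

Unset Implicit Arguments.
Theorem mainTheorem15 :
  exists C c : nat,
  forall (R : realType) (ud : bool) (m l T : nat) (H : R)
         (v : nat -> valuation R m),
    (0 < m)%N -> (0 < T)%N -> 1 <= H ->
    (forall (t : nat) (i : 'I_m), (t < T)%N -> 0 <= v t 0 i <= H) ->
    wm_regret ud l H v T <=
      C%:R * (m%:R ^+ 2 * H * l%:R * Num.sqrt (T%:R))
        * (1 + ln (m%:R * H * T%:R)) ^+ c.
Proof.
exists 10%N, 1%N => R ud m l T H v m0 T0 H1 vb.
rewrite /wm_regret /= expr1.
set al : R := T%:R^-1.
set r := Num.sqrt T%:R.
set b : R := r^-1.
set M := m%:R * H.
have Tpos : (0 < T%:R :> R) by rewrite ltr0n.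
have r0 : 0 < r by rewrite sqrtr_gt0.
have rr : r * r = T%:R by rewrite -expr2 sqr_sqrtr // ltW.
have T1 : 1 <= T%:R :> R by rewrite ler1n.
have r1 : 1 <= r by nra.
have m1 : 1 <= m%:R :> R by rewrite ler1n.
have M1 : 1 <= M by rewrite /M; nra.
have al0 : 0 < al by rewrite invr_gt0.
have alT : al * T%:R = 1 by rewrite mulVf // gt_eqF.
have al1 : al <= 1 by nra.
have b0 : 0 < b by rewrite invr_gt0.
have br : b * r = 1 by rewrite mulVf // gt_eqF.
have b1 : b <= 1 by nra.
case: (posnP l) => [l0|lpos].
  subst l.
  have hopt : opt_revenue ud 0 H v T <= 0.
    rewrite /opt_revenue; apply: ge_sup.
      exists 0; exists [ffun j => (0, 0)]; first by case.
      by rewrite big1 // => t _; rewrite /revenue big_ord0.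
    by move=> y [rho _ <-]; rewrite big1 // => t _; rewrite /revenue big_ord0.
  have hE : forall t0, wm_expected_revenue (l:=0) (disc_menus ud H al) H b v t0 = 0.
    move=> t0; rewrite /wm_expected_revenue fsbig1 ?mul0r // => rho _.
    by rewrite /revenue big_ord0 mulr0.
  rewrite big1 // mulr0 mul0r mulr0 mul0r subr0; exact: hopt.
pose Hn := (Num.truncn H).+1.
have HHn : H < Hn%:R by apply: truncnS_gt.
have HnH : Hn%:R <= H + 1.
  by rewrite /Hn -addn1 natrD lerD2r truncn_le ltW // (lt_le_trans ltr01).
pose A := (Hn * m * T * T)%N.
pose P := (Hn * m * T)%N.
have Hm1 : 1 <= H * m%:R by nra.
have hA : forall s, al / (H * m%:R) <= (1 - al) ^+ s -> (s < A)%N.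
  move=> s hs.
  have hb := @bern R al s (introT andP (conj (ltW al0) al1)).
  have e0 : 0 <= (1 - al) ^+ s by rewrite exprn_ge0 // subr_ge0.
  have hs' : al <= H * m%:R * (1 - al) ^+ s.
    by rewrite -ler_pdivrMl ?(lt_le_trans ltr01) // mulrC.
  have s0 : 0 <= s%:R :> R by [].
  have h1 : al * (1 + s%:R * al) <= H * m%:R.
    move: hb hs' e0; set p := (1 - al) ^+ s => hb hs' e0.
    have : 0 <= 1 + s%:R * al by rewrite addr_ge0 // mulr_ge0 // ltW.
    nra.
  have h2 : s%:R <= H * m%:R * T%:R * T%:R.
    have : s%:R * al * al * T%:R * T%:R = s%:R.
      by rewrite -!mulrA (mulrA al T%:R) alT mul1r alT mulr1.
    move=> <-.
    have hT : 0 <= T%:R * T%:R :> R by rewrite mulr_ge0 // ltW.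
    have : s%:R * al * al <= H * m%:R by nra.
    move=> h3; rewrite -!(mulrA _ T%:R) ler_pM2r ?mulr_gt0 //; exact: h3.
  rewrite -(ltr_nat R) /A !natrM.
  apply: le_lt_trans h2 _.
  by rewrite !ltr_pM2r ?ltr0n.
have hP : forall k : nat, k%:R * al <= m%:R * H -> (k <= P)%N.
  move=> k hk; apply: ltnW.
  rewrite -(ltr_nat R) /P !natrM.
  have : k%:R = k%:R * al * T%:R by rewrite -mulrA alT mulr1.
  move=> ->.
  apply: le_lt_trans (_ : m%:R * H * T%:R < _).
    by rewrite ler_pM2r.
  by rewrite ltr_pM2r // mulrC ltr_pM2r ?ltr0n.
have exg : forall phi : R, exists g, alloc_level m H al g /\
    (0 <= phi <= 1 -> 0 <= g <= phi /\ phi - g <= 2 * al).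
  move=> phi; case: (boolP (0 <= phi <= 1)) => hphi.
    have [g [h1 h2]] := round_alloc (introT andP (conj al0 al1)) Hm1 hphi.
    by exists g; split.
  by exists 0; split; [left | ].
have exk : forall x : R, exists k : nat, 0 <= x -> k%:R * al <= x < k%:R * al + al.
  move=> x; case: (boolP (0 <= x)) => hx.
    by have [k hk] := round_price al0 hx; exists k.
  by exists 0%N => hx'; exfalso; move/negP: hx; apply.
pose gs := fun phi => proj1_sig (cid (exg phi)).
pose ks := fun x => proj1_sig (cid (exk x)).
have gsA : forall phi, alloc_level m H al (gs phi).
  by move=> phi; have [] := proj2_sig (cid (exg phi)).
have gsB : forall phi, 0 <= phi <= 1 -> 0 <= gs phi <= phi /\ phi - gs phi <= 2 * al.
  by move=> phi; have [_ h] := proj2_sig (cid (exg phi)).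
have ksB : forall x, 0 <= x -> (ks x)%:R * al <= x < (ks x)%:R * al + al.
  by move=> x; have h := proj2_sig (cid (exk x)).
pose s := sq ud m l H al A P.
pose g := fun (rho : menu R m l) t => revenue rho (v t).
have M0 : 0 < M by apply: lt_le_trans M1.
have validX : forall rho, rho \in s -> valid_menu ud H rho.
  by move=> rho /(mem_sq ud hA hP) [].
have gb : forall rho t, rho \in s -> (t < T)%N -> 0 <= g rho t <= M.
  move=> rho t /validX vr _; rewrite /g bmax_ge0 /=; apply: bmax_le; first exact: ltW.
  by move=> j _; have [_ [/andP[]]] := vr j.
have hE : forall t : nat, wm_expected_revenue (l:=l) (disc_menus ud H al) H b v t = E _ _ s g M b t.
  move=> t; rewrite /wm_expected_revenue.
  have e1 := @fsum_sq R ud m l H al A P hA hP (fun rho => wm_weight H b v rho t * revenue rho (v t)).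
  have e2 := @fsum_sq R ud m l H al A P hA hP (fun rho => wm_weight H b v rho t).
  rewrite /Xd /= in e1 e2.
  rewrite /E /W; congr (_ / _); [exact: e1 | exact: e2].
have key : forall rho : menu R m l, valid_menu ud H rho ->
  \sum_(t < T) revenue rho (v t) <=
  \sum_(t < T) E _ _ s g M b t + M * r * (6 + ln (size s)%:R).
  move=> rho vr.
  pose rho' := rnd al b gs ks rho.
  have r's : rho' \in s.
    by apply/(mem_sq ud hA hP); apply: rnd_disc.
  have wmb := @wm_bound R _ s g M b T M0 b0 gb rho' r's.
  set eps := b * M + (2 * al * M + al) / b + al.
  have step : forall t, (t < T)%N -> revenue rho (v t) <= revenue rho' (v t) + eps.
    move=> t tT.
    apply: rev_disc => //.
    - by apply: mulr_ge0; [apply: mulr_ge0 => //; exact: ltW | exact: ltW].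
    - exact: ltW.
    - exact: ltW.
    - by move=> j; have [_ [/andP[]]] := vr j.
    - by move=> j; have [] := rnd_price gs ksB b1 j vr.
    - by move=> j; have [] := rnd_price gs ksB b1 j vr.
    - by move=> j; have [] := rnd_valu b ks gsB j vr (fun i => vb t i tT).
    - by move=> j; have [] := rnd_valu b ks gsB j vr (fun i => vb t i tT).
  have hsum : \sum_(t < T) revenue rho (v t) <=
      G R _ g rho' T + T%:R * eps.
    rewrite /G /g.
    apply: le_trans (_ : \sum_(t < T) (revenue rho' (v t) + eps) <= _).
      by apply: ler_sum => t _; apply: step.
    by rewrite big_split /= sumr_const card_ord mulr_natl.
  have Teps : T%:R * eps = 3 * M * r + r + 1.
    rewrite /eps /b /al -rr; field.
    by rewrite gt_eqF.
  have e3 : b * T%:R * M = M * r by rewrite -rr /b; field; rewrite gt_eqF.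
  have e4 : M * ln (size s)%:R / b = M * r * ln (size s)%:R by rewrite /b; field; rewrite gt_eqF.
  rewrite e3 e4 in wmb.
  have : r + 1 <= 2 * M * r by nra.
  lra.
pose z : menu R m l := [ffun=> (0, 0)].
have vz : valid_menu ud H z.
  move=> j; rewrite ffunE /=; split; first by move=> i; rewrite mxE lexx ler01.
  split; first by rewrite lexx mulr_ge0 // ?ler0n; apply: le_trans H1.
  by move=> _; rewrite big1 // => i _; rewrite mxE.
have Xz : disc_menus ud H al z.
  split => //; split.
  - by move=> j i; rewrite ffunE mxE; left.
  - by move=> j; rewrite ffunE; exists 0%N; rewrite mul0r.
have zs : z \in s by apply/(mem_sq ud hA hP).
have s0 : (0 < size s)%N.
  rewrite lt0n size_eq0; apply/eqP => e; move: zs; rewrite -/s e.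
  by [].
have hopt : opt_revenue ud l H v T <=
    \sum_(t < T) E _ _ s g M b t + M * r * (6 + ln (size s)%:R).
  rewrite /opt_revenue; apply: ge_sup.
    by exists (\sum_(t < T) revenue z (v t)), z.
  by move=> y [rho vr <-]; apply: key.
have hsum : \sum_(t < T) wm_expected_revenue (l:=l) (disc_menus ud H al) H b v t
    = \sum_(t < T) E _ _ s g M b t by apply: eq_bigr => t _; exact: hE.
rewrite hsum.
set L := ln (M * T%:R).
set N : R := (size s)%:R.
have Q1 : 1 <= M * T%:R by nra.
have L0 : 0 <= L by apply: ln_ge0.
have N1 : 1 <= N by rewrite /N ler1n.
have hsz : (size s <= (A.+1 ^ m * P.+1) ^ l)%N by rewrite -card_Fty size_sq.
set A1 : R := (A.+1)%:R.
set P1 : R := (P.+1)%:R.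
have A1p : 0 < A1 by rewrite /A1 ltr0n.
have P1p : 0 < P1 by rewrite /P1 ltr0n.
have PA : P1 <= A1.
  rewrite /P1 /A1 ler_nat ltnS /P /A -mulnA leq_pmulr //.
have hN1 : ln N <= l%:R * (m%:R * ln A1 + ln P1).
  have -> : l%:R * (m%:R * ln A1 + ln P1) = ln (((A.+1 ^ m * P.+1) ^ l)%N%:R).
    rewrite natrX natrM natrX lnXn ?mulr_gt0 ?exprn_gt0 //.
    rewrite lnM ?posrE ?exprn_gt0 // lnXn //.
    by rewrite -/A1 -/P1 mulr_natl mulr_natl.
  rewrite ler_ln ?posrE ?ltr0n ?(leq_trans s0 hsz) //.
  by rewrite ler_nat.
have lnPA : ln P1 <= ln A1 by rewrite ler_ln ?posrE.
have lnA0 : 0 <= ln A1 by rewrite ln_ge0 // /A1 ler1n.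
have A1Q : A1 <= 3 * ((M * T%:R) * (M * T%:R)).
  rewrite /A1 -addn1 natrD /A !natrM.
  have Hn0 : 0 <= Hn%:R :> R by [].
  have mT : 0 <= m%:R * T%:R * T%:R :> R by rewrite !mulr_ge0.
  have h1 : Hn%:R * m%:R * T%:R * T%:R <= (H + 1) * (m%:R * T%:R * T%:R).
    have -> : Hn%:R * m%:R * T%:R * T%:R = Hn%:R * (m%:R * T%:R * T%:R) :> R by ring.
    by rewrite ler_wpM2r.
  have h2 : H * m%:R * T%:R * T%:R <= M * T%:R * (M * T%:R).
    rewrite /M; have : 1 <= m%:R * H by [].
    move=> hm; have hT : 0 <= T%:R * T%:R :> R by rewrite mulr_ge0 // ltW.
    have : H * m%:R * T%:R * T%:R = (m%:R * H) * (T%:R * T%:R) by ring.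
    move=> ->.
    have : m%:R * H * T%:R * (m%:R * H * T%:R) = (m%:R * H) * (m%:R * H) * (T%:R * T%:R) by ring.
    move=> ->; rewrite ler_pM2r ?mulr_gt0 //; nra.
  have h3 : 1 <= H * m%:R * T%:R * T%:R.
    have : 1 <= T%:R * T%:R :> R by nra.
    have : H * m%:R * T%:R * T%:R = (H * m%:R) * (T%:R * T%:R) by ring.
    move=> -> ?; nra.
  have h4 : (H + 1) * (m%:R * T%:R * T%:R) <= 2 * (H * m%:R * T%:R * T%:R).
    have : (H + 1) * (m%:R * T%:R * T%:R) = H * m%:R * T%:R * T%:R + m%:R * T%:R * T%:R by ring.
    move=> ->.
    have : m%:R * T%:R * T%:R <= H * m%:R * T%:R * T%:R.
      have : H * m%:R * T%:R * T%:R = H * (m%:R * T%:R * T%:R) by ring.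
      move=> ->; rewrite ler_peMl //.
    lra.
  lra.
have ln3 : ln (3 : R) <= 2.
  have := expR_ge1Dx (2 : R).
  move=> h; rewrite -[X in _ <= X](expRK (2 : R)) ler_ln ?posrE ?expR_gt0 //; lra.
have lnA1 : ln A1 <= 2 + 2 * L.
  have Qp : 0 < M * T%:R by apply: lt_le_trans Q1.
  apply: le_trans (_ : ln (3 * ((M * T%:R) * (M * T%:R))) <= _).
    have p3 : 0 < 3 * (M * T%:R * (M * T%:R)) by move: Qp; set Q := M * T%:R; nra.
    by rewrite ler_ln ?posrE.
  have q2 : M * T%:R * (M * T%:R) \is Num.pos by rewrite posrE mulr_gt0.
  have p3 : (3 : R) \is Num.pos by rewrite posrE ltr0n.
  rewrite lnM // lnM ?posrE //.
  rewrite -/L; lra.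
have hN : ln N <= l%:R * (m%:R + 1) * (2 + 2 * L).
  have l0 : 0 <= l%:R :> R by [].
  apply: le_trans hN1 _.
  have : m%:R * ln A1 + ln P1 <= (m%:R + 1) * (2 + 2 * L).
    have : m%:R * ln A1 <= m%:R * (2 + 2 * L) by rewrite ler_pM2l ?ltr0n.
    lra.
  move=> h; rewrite -mulrA ler_wpM2l //.
have l1 : 1 <= l%:R :> R by rewrite ler1n.
have h6 : 6 + ln N <= 10 * (m%:R * l%:R) * (1 + L).
  have : l%:R * (m%:R + 1) <= 2 * (m%:R * l%:R) :> R.
    have : l%:R <= m%:R * l%:R :> R by rewrite ler_peMl.
    have e : l%:R * (m%:R + 1) = m%:R * l%:R + l%:R :> R by ring.
    rewrite e; lra.
  move=> h.
  have h7 : l%:R * (m%:R + 1) * (2 + 2 * L) <= 2 * (m%:R * l%:R) * (2 + 2 * L).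
    by rewrite ler_wpM2r //; lra.
  have ml1 : 1 <= m%:R * l%:R :> R by rewrite -natrM ler1n muln_gt0 m0 lpos.
  have h8 : 1 + L <= m%:R * l%:R * (1 + L) by rewrite ler_peMl //; lra.
  clear -h7 h8 hN L0; nra.
have -> : m%:R ^+ 2 * H * l%:R * r = M * r * (m%:R * l%:R) by rewrite /M; ring.
have Mr : 0 < M * r by rewrite mulr_gt0.
have : M * r * (6 + ln N) <= M * r * (10 * (m%:R * l%:R) * (1 + L)) by rewrite ler_pM2l.
rewrite -/N in hopt.
move=> h; have : 10 * (M * r * (m%:R * l%:R)) * (1 + L) = M * r * (10 * (m%:R * l%:R) * (1 + L)) by ring.
move=> ->; lra.
Qed.
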